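(* Consider a recurrent network of $N$ units partitioned into $C$ cell types, with recurrent weight matrix $W$, a scalar $\mu$, and, at each time $t=1,2,\dots$, given eligibility traces $e_{pq,t}$, learning signals $L_{j,t}=\frac{\partial E}{\partial z_{j,t}}$ and activation derivatives $h_{j,t}$. The ModProp update $$\Delta W_{pq}\big|_t=L_{p,t}\,e_{pq,t}+\sum_{\alpha\in C}\Big(\sum_{j\in\alpha}L_{j,t}h_{j,t}\Big)\sum_{s=1}^{t}(W^s)_{\alpha\beta}\,\mu^{s-1}\,e_{pq,t-s}\qquad(p\in\beta)$$ admits an online (causal, computed in real time as $t$ advances) in-silico implementation, computing $\Delta W_{pq}|_t$ for all $p,q$ at every time step, with $O(CN^2)$ storage and $O(C^2N^2)$ computational complexity per time step.
   Context: For cell types $\alpha,\beta$, $N_\alpha$ is the number of units of type $\alpha$, $W_{\alpha\beta}=\mathbb{E}_{j\in\alpha,p\in\beta}[W_{jp}]$ is the average of the recurrent weights from type-$\beta$ units to type-$\alpha$ units, $(W^1)_{\alpha\beta}=W_{\alpha\beta}$, and $(W^{s+1})_{\alpha\beta}=\sum_{\gamma\in C}N_\gamma (W^1)_{\alpha\gamma}(W^s)_{\gamma\beta}$ (the type-level entries of the $(s+1)$-th power of the matrix whose $(i,j)$ entry is $W_{\alpha\beta}$ for $i\in\alpha,j\in\beta$). The implementation need not be biologically plausible. *)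

(* Defs.v *)
From HB Require Import structures.
From mathcomp Require Import all_boot all_order all_algebra.
From mathcomp Require Import reals.
Set Implicit Arguments. Unset Strict Implicit. Unset Printing Implicit Defensive.
Import Order.TTheory GRing.Theory Num.Theory.
Local Open Scope ring_scope.

Section ModProp.
Variables (R : realType) (N C : nat).
Variable ty : 'I_N -> 'I_C.
Variable W : 'M[R]_N.             (* W j p : weight from unit p to unit j *)
Variable mu : R.

Definition Ntype (a : 'I_C) : R := #|[set j | ty j == a]|%:R.

(* type-averaged weight W_{alpha beta} = E_{j in alpha, p in beta} W_{jp} *)
Definition Wavg (a b : 'I_C) : R :=
  (\sum_(j | ty j == a) \sum_(p | ty p == b) W j p) / (Ntype a * Ntype b).

(* Wpow k a b = (W^{k+1})_{alpha beta} *)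
Fixpoint Wpow (k : nat) (a b : 'I_C) : R :=
  match k with
  | 0 => Wavg a b
  | k'.+1 => \sum_(g < C) Ntype g * Wavg a g * Wpow k' g b
  end.

Variables (e : nat -> 'I_N -> 'I_N -> R) (L h : nat -> 'I_N -> R).

Definition modprop (t : nat) (p q : 'I_N) : R :=
  L t p * e t p q +
  \sum_(a < C) (\sum_(j | ty j == a) L t j * h t j) *
     \sum_(1 <= s < t.+1) Wpow s.-1 a (ty p) * mu ^+ s.-1 * e (t - s)%N p q.

End ModProp.

(* ---------- A model of online (in-silico) computation ----------
   Memory: m real registers (this is the storage).  At every time step the
   same straight-line program is executed on the memory; it may read the
   current inputs e_t, L_t, h_t and do arithmetic.  Cost per time step =
   number of instructions. Registers persist from one step to the next. *)
Inductive instr (R : Type) (N m : nat) :=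
| ILoadE of 'I_N & 'I_N & 'I_m
| ILoadL of 'I_N & 'I_m
| ILoadH of 'I_N & 'I_m
| IConst of R & 'I_m
| IAdd of 'I_m & 'I_m & 'I_m
| IMul of 'I_m & 'I_m & 'I_m.

Section Exec.
Variables (R : realType) (N m : nat).

Definition upd (s : 'I_m -> R) (r : 'I_m) (v : R) : 'I_m -> R :=
  fun k => if k == r then v else s k.

Definition exec_instr (E : 'I_N -> 'I_N -> R) (Lv hv : 'I_N -> R)
  (s : 'I_m -> R) (i : instr R N m) : 'I_m -> R :=
  match i with
  | ILoadE p q r => upd s r (E p q)
  | ILoadL j r => upd s r (Lv j)
  | ILoadH j r => upd s r (hv j)
  | IConst c r => upd s r c
  | IAdd a b r => upd s r (s a + s b)
  | IMul a b r => upd s r (s a * s b)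
  end.

Definition exec_step (prog : seq (instr R N m)) (E : 'I_N -> 'I_N -> R)
  (Lv hv : 'I_N -> R) (s : 'I_m -> R) : 'I_m -> R :=
  foldl (exec_instr E Lv hv) s prog.

(* memory after processing time steps 0, 1, ..., t (causal by construction) *)
Fixpoint run (prog : seq (instr R N m)) (s0 : 'I_m -> R)
  (e : nat -> 'I_N -> 'I_N -> R) (L h : nat -> 'I_N -> R) (t : nat)
  : 'I_m -> R :=
  match t with
  | 0 => exec_step prog (e 0) (L 0) (h 0) s0
  | t'.+1 => exec_step prog (e t) (L t) (h t) (run prog s0 e L h t')
  end.
End Exec.

(* Main.v *)
Require Import Defs.
From HB Require Import structures.
From mathcomp Require Import all_boot all_order all_algebra.
From mathcomp Require Import reals.
From mathcomp Require Import ring zify.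
Set Implicit Arguments. Unset Strict Implicit. Unset Printing Implicit Defensive.
Import GRing.Theory Num.Theory.
Local Open Scope ring_scope.

Arguments ILoadE {R N m}. Arguments ILoadL {R N m}. Arguments ILoadH {R N m}.
Arguments IConst {R N m}. Arguments IAdd {R N m}. Arguments IMul {R N m}.

Section Gen.
Variables (R : realType) (N m : nat).
Variables (E : 'I_N -> 'I_N -> R) (Lv hv : 'I_N -> R).
Notation ex pr s := (@exec_step R N m pr E Lv hv s).
Notation I := (instr R N m).

Lemma ex_cat (p1 p2 : seq I) s : ex (p1 ++ p2) s = ex p2 (ex p1 s).
Proof. by rewrite /exec_step foldl_cat. Qed.

Lemma ex_cons (i : I) p s : ex (i :: p) s = ex p (exec_instr E Lv hv s i).
Proof. by []. Qed.

Lemma ex_nil s : ex [::] s = s.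
Proof. by []. Qed.

Definition acc_prog (G : Type) (y : 'I_m) (pre : G -> seq I) (gs : seq G) (acc : 'I_m) :=
  flatten [seq pre g ++ [:: IAdd acc y acc] | g <- gs].

Lemma acc_loop (G : Type) (y : 'I_m) (pre : G -> seq I) (acc : 'I_m)
  (scr : pred 'I_m) (V : G -> R) (s0 : 'I_m -> R) :
  scr y -> ~~ scr acc ->
  (forall g s, (forall k, k != acc -> ~~ scr k -> s k = s0 k) ->
     ex (pre g) s y = V g /\ forall k, ~~ scr k -> ex (pre g) s k = s k) ->
  forall gs s, (forall k, k != acc -> ~~ scr k -> s k = s0 k) ->
   ex (acc_prog y pre gs acc) s acc = s acc + \sum_(g <- gs) V g /\
   forall k, k != acc -> ~~ scr k -> ex (acc_prog y pre gs acc) s k = s k.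
Proof.
move=> sy nsacc Hpre; elim=> [|g gs IH] s Hs.
  by rewrite big_nil addr0.
rewrite /acc_prog /= ex_cat -/(acc_prog y pre gs acc) ex_cat.
have [H1 H2] := Hpre g s Hs.
set s1 := ex (pre g) s.
set s2 := ex [:: IAdd acc y acc] s1.
have e2 : forall k, s2 k = if k == acc then s acc + V g else s1 k.
  move=> k; rewrite /s2 /= /upd /s1 H1 H2 //.
have Hs2 : forall k, k != acc -> ~~ scr k -> s2 k = s0 k.
  by move=> k nk sk; rewrite e2 (negbTE nk) /s1 H2 // Hs.
have [IH1 IH2] := IH s2 Hs2.
split; first by rewrite IH1 e2 eqxx big_cons addrA.
by move=> k nk sk; rewrite IH2 // e2 (negbTE nk) /s1 H2.
Qed.

Lemma loop (X : eqType) (blk : X -> seq I) (own : X -> pred 'I_m) (scr : pred 'I_m)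
  (rd : X -> pred 'I_m) (F : X -> ('I_m -> R) -> 'I_m -> R) :
 (forall x y k, x != y -> own x k -> own y k = false) ->
 (forall x k, own x k -> scr k = false) ->
 (forall x y k, x != y -> rd y k -> own x k = false) ->
 (forall y k, rd y k -> scr k = false) ->
 (forall x s s', (forall k, rd x k -> s k = s' k) -> forall k, own x k -> F x s k = F x s' k) ->
 (forall x s k, own x k -> ex (blk x) s k = F x s k) ->
 (forall x s k, ~~ own x k -> ~~ scr k -> ex (blk x) s k = s k) ->
 forall xs, uniq xs -> forall s,
 (forall x k, x \in xs -> own x k -> ex (flatten (map blk xs)) s k = F x s k) /\
 (forall k, ~~ scr k -> (forall x, x \in xs -> ~~ own x k) -> ex (flatten (map blk xs)) s k = s k).
Proof.
move=> Hoo Hos Hro Hrs HF Hb Hf; elim=> [|x xs IH] //= /andP[xn u] s.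
rewrite ex_cat; set s1 := ex (blk x) s.
have [A B] := IH u s1.
split.
  move=> x0 k; rewrite inE => /orP[/eqP->|x0in] ok.
    rewrite B; [by rewrite /s1 Hb | by rewrite (Hos _ _ ok) |].
    move=> y yin; apply/negbT; apply: (Hoo x) => //.
    by apply: contraNneq xn => ->.
  rewrite (A x0) // (HF x0 s1 s) // => k' rk'.
  rewrite /s1 Hf //.
    apply/negbT; apply: (Hro x x0) => //.
    by apply: contraNneq xn => ->.
  by rewrite (Hrs x0 k' rk').
move=> k sk Hk; rewrite B //; last by move=> y yin; apply: Hk; rewrite inE yin orbT.
by rewrite /s1 Hf // Hk // inE eqxx.
Qed.

End Gen.

Section Spec.
Variables (R : realType) (N C : nat) (ty : 'I_N -> 'I_C) (W : 'M[R]_N) (mu : R).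

Definition Reg := ((('I_N*'I_N) + ('I_C*('I_N*'I_N))) + (('I_C + 'I_C) + (('I_N*'I_N) + bool)))%type.
Notation m := #|{: Reg}|.
Definition enc (r : Reg) : 'I_m := enum_rank r.
Lemma encE r r' : (enc r == enc r') = (r == r').
Proof. exact: (inj_eq enum_rank_inj). Qed.

Definition rE p q := enc (inl (inl (p,q))).
Definition rM a p q := enc (inl (inr (a,(p,q)))).
Definition rT a := enc (inr (inl (inl a))).
Definition rS a := enc (inr (inl (inr a))).
Definition rO p q := enc (inr (inr (inl (p,q)))).
Definition rY := enc (inr (inr (inr true))).
Definition rZ := enc (inr (inr (inr false))).

Notation I := (instr R N m).
Definition pS a : seq I := IConst 0 (rS a) ::
  acc_prog rY (fun j => [:: ILoadL j rY; ILoadH j rZ; IMul rY rZ rY])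
     [seq j <- index_enum 'I_N | ty j == a] (rS a).
Definition progS := flatten [seq pS a | a <- index_enum 'I_C].
Definition cf a g := mu * @Ntype R N C ty g * Wavg ty W a g.
Definition stepT p q a : seq I :=
  [:: IConst (Wavg ty W a (ty p)) (rT a); IMul (rT a) (rE p q) (rT a)] ++
  acc_prog rY (fun g => [:: IConst (cf a g) rY; IMul rY (rM g p q) rY]) (index_enum 'I_C) (rT a).
Definition copy p q : seq I := IConst 0 rZ :: flatten [seq [:: IAdd (rT a) rZ (rM a p q)] | a <- index_enum 'I_C].
Definition outp p q : seq I :=
  [:: ILoadE p q (rE p q); ILoadL p (rO p q); IMul (rO p q) (rE p q) (rO p q)] ++
  acc_prog rY (fun a => [:: IMul (rS a) (rM a p q) rY]) (index_enum 'I_C) (rO p q).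
Definition blk (x : ('I_N * 'I_N)%type) := flatten [seq stepT x.1 x.2 a | a <- index_enum 'I_C] ++ copy x.1 x.2 ++ outp x.1 x.2.
Definition prog := progS ++ flatten [seq blk x | x <- index_enum ('I_N * 'I_N)%type].

Ltac dec := rewrite /rE /rM /rT /rS /rO /rY /rZ /= ?encE /=.


Lemma nYZ : (rY == rZ) = false. Proof. by dec. Qed.
Lemma nZY : (rZ == rY) = false. Proof. by dec. Qed.

Definition tag (r : Reg) : option ('I_N * 'I_N)%type :=
  match r with inl (inl x) => Some x | inl (inr (_, x)) => Some x | inr (inr (inl x)) => Some x | _ => None end.
Definition isScr (r : Reg) : bool :=
  match r with inr (inl (inl _)) => true | inr (inr (inr _)) => true | _ => false end.
Definition isS (r : Reg) : bool := match r with inr (inl (inr _)) => true | _ => false end.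

Lemma enc_neq_tag r r' : tag r != tag r' -> enc r != enc r'.
Proof. by rewrite encE; apply: contra => /eqP->. Qed.
Lemma enc_neq_scr r r' : isScr r != isScr r' -> enc r != enc r'.
Proof. by rewrite encE; apply: contra => /eqP->. Qed.

Section Sem.
Variables (E : 'I_N -> 'I_N -> R) (Lv hv : 'I_N -> R).
Notation ex pr s := (@exec_step R N m pr E Lv hv s).

Definition scrS (k : 'I_m) := (k == rY) || (k == rZ).

Lemma pS_spec a s : ex (pS a) s (rS a) = \sum_(j | ty j == a) Lv j * hv j /\
  forall k, k != rS a -> ~~ scrS k -> ex (pS a) s k = s k.
Proof.
rewrite /pS ex_cons; set s1 := exec_instr _ _ _ s _.
have := @acc_loop R N m E Lv hv _ rY (fun j => [:: ILoadL j rY; ILoadH j rZ; IMul rY rZ rY])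
   (rS a) scrS (fun j => Lv j * hv j) s1 _ _ _ [seq j <- index_enum 'I_N | ty j == a] s1 (fun _ _ _ => erefl).
case.
- by rewrite /scrS eqxx.
- by rewrite /scrS; dec.
- move=> j s' _; split; first by rewrite /= /upd !eqxx nYZ.
  move=> k; rewrite /scrS negb_or => /andP[ky kz]; by rewrite /= /upd (negbTE ky) (negbTE kz).
move=> H1 H2; split.
  by rewrite H1 big_filter /s1 /= /upd eqxx add0r.
by move=> k nk sk; rewrite H2 // /s1 /= /upd (negbTE nk).
Qed.

Lemma progS_spec s : (forall a, ex progS s (rS a) = \sum_(j | ty j == a) Lv j * hv j) /\
  (forall k, ~~ scrS k -> (forall a, k != rS a) -> ex progS s k = s k).
Proof.
have [] := @loop R N m E Lv hv _ pS (fun a k => k == rS a) scrS (fun _ _ => false)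
  (fun a _ _ => \sum_(j | ty j == a) Lv j * hv j) _ _ _ _ _ _ _ (index_enum 'I_C) (index_enum_uniq _) s.
- by move=> x y k nxy /eqP->; dec; apply/negbTE.
- by move=> x k /eqP->; rewrite /scrS; dec.
- by [].
- by [].
- by [].
- by move=> x s' k /eqP->; exact: (pS_spec x s').1.
- by move=> x s' k nk sk; exact: (pS_spec x s').2.
move=> A B; split; first by move=> a; apply: A; rewrite ?mem_index_enum.
by move=> k sk Hk; apply: B => // a _; exact: Hk.
Qed.

Definition Tval p q a (s : 'I_m -> R) :=
  Wavg ty W a (ty p) * s (rE p q) + \sum_(g <- index_enum 'I_C) cf a g * s (rM g p q).

Lemma stepT_spec p q a s : ex (stepT p q a) s (rT a) = Tval p q a s /\
  forall k, k != rT a -> k != rY -> ex (stepT p q a) s k = s k.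
Proof.
rewrite /stepT ex_cat; set s1 := ex _ s.
have e1 : forall k, s1 k = if k == rT a then Wavg ty W a (ty p) * s (rE p q) else s k.
  move=> k; rewrite /s1 /= /upd; case: eqP => // _; rewrite eqxx.
  by have -> : (rE p q == rT a) = false by dec.
have := @acc_loop R N m E Lv hv _ rY (fun g => [:: IConst (cf a g) rY; IMul rY (rM g p q) rY])
   (rT a) (pred1 rY) (fun g => cf a g * s (rM g p q)) s1 _ _ _ (index_enum 'I_C) s1 (fun _ _ _ => erefl).
case.
- by rewrite /= eqxx.
- by rewrite /=; dec.
- move=> g s' Hs'; split.
    rewrite /= /upd !eqxx.
    have -> : (rM g p q == rY) = false by dec.
    rewrite Hs'; first by rewrite e1; have -> : (rM g p q == rT a) = false by dec.
      by dec.
    by dec.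
  by move=> k /= nk; rewrite /upd (negbTE nk).
move=> H1 H2; split; first by rewrite H1 e1 eqxx.
by move=> k nk ny; rewrite H2 ?ny // e1 (negbTE nk).
Qed.

Definition step1 p q := flatten [seq stepT p q a | a <- index_enum 'I_C].

Lemma step1_spec p q s : (forall a, ex (step1 p q) s (rT a) = Tval p q a s) /\
  (forall k, (forall a, k != rT a) -> k != rY -> ex (step1 p q) s k = s k).
Proof.
have [] := @loop R N m E Lv hv _ (stepT p q) (fun a k => k == rT a) (fun k => k == rY)
  (fun a k => (k == rE p q) || [exists g, k == rM g p q])
  (fun a s _ => Tval p q a s) _ _ _ _ _ _ _ (index_enum 'I_C) (index_enum_uniq _) s.
- by move=> x y k nxy /eqP->; dec; apply/negbTE.
- by move=> x k /eqP->; dec.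
- by move=> x y k nxy /orP[/eqP->|/existsP[g /eqP->]]; dec.
- by move=> y k /orP[/eqP->|/existsP[g /eqP->]]; dec.
- move=> x s1 s2 Hs k _; rewrite /Tval Hs ?eqxx //; congr (_ + _).
  apply: eq_bigr => g _; rewrite Hs //; apply/orP; right; apply/existsP; exists g; exact: eqxx.
- by move=> x s' k /eqP->; exact: (stepT_spec p q x s').1.
- by move=> x s' k nk sk; exact: (stepT_spec p q x s').2.
move=> A B; split; first by move=> a; apply: A; rewrite ?mem_index_enum.
by move=> k Hk ky; apply: B => // a _; exact: Hk.
Qed.

Lemma copy_spec p q s : (forall a, ex (copy p q) s (rM a p q) = s (rT a)) /\
  (forall k, k != rZ -> (forall a, k != rM a p q) -> ex (copy p q) s k = s k).
Proof.
rewrite /copy ex_cons; set s1 := exec_instr _ _ _ s _.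
have [] := @loop R N m E Lv hv _ (fun a => [:: IAdd (rT a) rZ (rM a p q)]) (fun a k => k == rM a p q) (fun k => false)
  (fun a k => (k == rT a) || (k == rZ))
  (fun a s _ => s (rT a) + s rZ) _ _ _ _ _ _ _ (index_enum 'I_C) (index_enum_uniq _) s1.
- move=> x y k nxy /eqP->; dec; apply/negbTE/eqP; case=> xy; by rewrite xy eqxx in nxy.
- by [].
- by move=> x y k nxy /orP[/eqP->|/eqP->]; dec.
- by [].
- by move=> x s2 s3 Hs k _; rewrite !Hs // ?eqxx ?orbT.
- by move=> x s' k /eqP->; rewrite /= /upd eqxx.
- by move=> x s' k nk _; rewrite /= /upd (negbTE nk).
move=> A B; split.
  move=> a; rewrite (A a) ?mem_index_enum // /s1 /= /upd eqxx addr0.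
  by have -> : (rT a == rZ) = false by dec.
move=> k kz Hk; rewrite B //.
by rewrite /s1 /= /upd (negbTE kz).
Qed.

Lemma outp_spec p q s :
  ex (outp p q) s (rE p q) = E p q /\
  ex (outp p q) s (rO p q) = Lv p * E p q + \sum_(a <- index_enum 'I_C) s (rS a) * s (rM a p q) /\
  (forall k, k != rE p q -> k != rO p q -> k != rY -> ex (outp p q) s k = s k).
Proof.
rewrite /outp ex_cat; set s1 := ex _ s.
have nEO : (rE p q == rO p q) = false by dec.
have e1 : forall k, s1 k = if k == rO p q then Lv p * E p q else if k == rE p q then E p q else s k.
  have nOE : (rO p q == rE p q) = false by dec.
  by move=> k; rewrite /s1 /= /upd !eqxx nEO; case: eqP.
have := @acc_loop R N m E Lv hv _ rY (fun a => [:: IMul (rS a) (rM a p q) rY])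
   (rO p q) (pred1 rY) (fun a => s (rS a) * s (rM a p q)) s1 _ _ _ (index_enum 'I_C) s1 (fun _ _ _ => erefl).
case.
- by rewrite /= eqxx.
- by rewrite /=; dec.
- move=> a s' Hs'; split.
    rewrite /= /upd !eqxx.
    rewrite !Hs' ?e1; try by dec.
  by move=> k /= nk; rewrite /upd (negbTE nk).
move=> H1 H2; split; last split.
- by rewrite H2 ?e1 ?nEO ?eqxx //; dec.
- by rewrite H1 e1 eqxx.
by move=> k nE nO ny; rewrite H2 ?ny // e1 (negbTE nO) (negbTE nE).
Qed.

Lemma blk_spec p q s :
  ex (blk (p, q)) s (rE p q) = E p q /\
  (forall a, ex (blk (p, q)) s (rM a p q) = Tval p q a s) /\
  ex (blk (p, q)) s (rO p q) = Lv p * E p q + \sum_(a <- index_enum 'I_C) s (rS a) * Tval p q a s /\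
  (forall k, k != rE p q -> k != rO p q -> (forall a, k != rM a p q) -> (forall a, k != rT a) ->
      k != rY -> k != rZ -> ex (blk (p, q)) s k = s k).
Proof.
have -> : blk (p, q) = step1 p q ++ copy p q ++ outp p q by [].
rewrite ex_cat ex_cat.
set s1 := ex (step1 p q) s; set s2 := ex (copy p q) s1.
have [A1 B1] := step1_spec p q s.
have [A2 B2] := copy_spec p q s1.
have [A3 [B3 C3]] := outp_spec p q s2.
have eM : forall a, ex (outp p q) s2 (rM a p q) = Tval p q a s.
  move=> a; rewrite C3; try by dec.
  by rewrite /s2 A2 /s1 A1.
split; first exact: A3.
split; first exact: eM.
split.
  rewrite B3; congr (_ + _); apply: eq_bigr => a _.
  rewrite -eM C3; try by dec.
  congr (_ * _); rewrite /s2 B2; try by dec.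
  rewrite /s1 B1 //; try by move=> g; dec.
  by dec.
  by move=> g; dec.
move=> k nE nO nM nT nY nZ.
by rewrite C3 // /s2 B2 // /s1 B1.
Qed.

Definition ownB (x : ('I_N * 'I_N)%type) (k : 'I_m) := tag (enum_val k) == Some x.
Definition scrB (k : 'I_m) := isScr (enum_val k).
Definition progB := flatten [seq blk x | x <- index_enum ('I_N * 'I_N)%type].

Lemma blk_frame x s k : ~~ ownB x k -> ~~ scrB k -> ex (blk x) s k = s k.
Proof.
case: x => p q; rewrite /ownB /scrB -{3 4}(enum_valK k); move: (enum_val k) => r nt ns.
have [_ [_ [_ F]]] := blk_spec p q s.
apply: F.
- exact: enc_neq_tag.
- exact: enc_neq_tag.
- by move=> a; exact: enc_neq_tag.
- by move=> a; apply: enc_neq_scr; move: ns; case: (isScr r).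
- by apply: enc_neq_scr; move: ns; case: (isScr r).
- by apply: enc_neq_scr; move: ns; case: (isScr r).
Qed.

Definition rdB x (k : 'I_m) := ownB x k || isS (enum_val k).

Lemma progB_spec s p q :
  ex progB s (rE p q) = E p q /\
  (forall a, ex progB s (rM a p q) = Tval p q a s) /\
  ex progB s (rO p q) = Lv p * E p q + \sum_(a <- index_enum 'I_C) s (rS a) * Tval p q a s.
Proof.
have [] := @loop R N m E Lv hv _ blk ownB scrB rdB (fun x s => ex (blk x) s) _ _ _ _ _ _ _
   (index_enum ('I_N * 'I_N)%type) (index_enum_uniq _) s.
- move=> x y k nxy; rewrite /ownB => /eqP ->; apply/negbTE; apply: contra nxy => /eqP[->] //.
- by move=> x k; rewrite /ownB /scrB; case: (enum_val k) => [[?|[? ?]]|[[?|?]|[?|?]]].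
- move=> x y k nxy; rewrite /rdB /ownB; case: (enum_val k) => [[?|[? ?]]|[[?|?]|[?|?]]] //=;
  rewrite orbF => /eqP[->]; apply/negbTE; apply: contra nxy => /eqP[->] //.
- by move=> x k; rewrite /rdB /ownB /scrB; case: (enum_val k) => [[?|[? ?]]|[[?|?]|[?|?]]].
- move=> [p' q'] s1 s2 Hs k; rewrite /ownB; move: (enum_valK k); move: (enum_val k) => r <-.
  have rdE : forall r', tag r' == Some (p', q') -> s1 (enc r') = s2 (enc r').
    by move=> r' h; apply: Hs; rewrite /rdB /ownB enum_rankK h.
  have rdS : forall a, s1 (rS a) = s2 (rS a).
    by move=> a; apply: Hs; rewrite /rdB /rS /enc enum_rankK orbT.
  have eT : forall a, Tval p' q' a s1 = Tval p' q' a s2.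
    move=> a; rewrite /Tval (rdE (inl (inl (p', q')))) ?eqxx //; congr (_ + _).
    by apply: eq_bigr => g _; rewrite (rdE (inl (inr (g, (p', q'))))) ?eqxx.
  case: r => [[x'|[a x']]|[[?|?]|[x'|?]]] //= /eqP[->].
  + by rewrite (blk_spec p' q' s1).1 (blk_spec p' q' s2).1.
  + by have [_ [H1 _]] := blk_spec p' q' s1; have [_ [H2 _]] := blk_spec p' q' s2;
      rewrite -/(rM a p' q') H1 H2 eT.
  + have [_ [_ [H1 _]]] := blk_spec p' q' s1; have [_ [_ [H2 _]]] := blk_spec p' q' s2.
    rewrite -/(rO p' q') H1 H2; congr (_ + _); apply: eq_bigr => a _; by rewrite rdS eT.
- by [].
- by move=> x s1 k; exact: blk_frame.
move=> A _.
have own1 : forall r, ownB (p, q) (enc r) = (tag r == Some (p, q)).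
  by move=> r; rewrite /ownB enum_rankK.
rewrite /progB.
split; first by rewrite (A (p, q)) ?mem_index_enum ?(blk_spec p q s).1 // /rE own1.
split; first by move=> a; rewrite (A (p, q)) ?mem_index_enum ?(blk_spec p q s).2.1 // /rM own1.
by rewrite (A (p, q)) ?mem_index_enum ?(blk_spec p q s).2.2.1 // /rO own1.
Qed.

Lemma prog_spec s p q :
  ex prog s (rE p q) = E p q /\
  (forall a, ex prog s (rM a p q) = Tval p q a s) /\
  ex prog s (rO p q) = Lv p * E p q +
     \sum_(a <- index_enum 'I_C) (\sum_(j | ty j == a) Lv j * hv j) * Tval p q a s.
Proof.
rewrite /prog ex_cat; set s1 := ex progS s.
have [SA SB] := progS_spec s.
have eT : forall a, Tval p q a s1 = Tval p q a s.
  move=> a; rewrite /Tval /s1 SB; first congr (_ + _).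
  - apply: eq_bigr => g _; rewrite SB //; first by rewrite /scrS; dec.
    by move=> a'; dec.
  - by rewrite /scrS; dec.
  - by move=> a'; dec.
have [H1 [H2 H3]] := progB_spec s1 p q.
split; first exact: H1.
split; first by move=> a; rewrite H2 eT.
rewrite H3; congr (_ + _); apply: eq_bigr => a _; by rewrite eT /s1 SA.
Qed.

End Sem.

Definition Mval (e : nat -> 'I_N -> 'I_N -> R) t a p q :=
  \sum_(1 <= s < t.+1) Wpow ty W s.-1 a (ty p) * mu ^+ s.-1 * e (t - s)%N p q.

Lemma Mval0 e a p q : Mval e 0 a p q = 0.
Proof. by rewrite /Mval big_geq. Qed.

Lemma MvalS e t a p q : Mval e t.+1 a p q =
  Wavg ty W a (ty p) * e t p q + \sum_(g <- index_enum 'I_C) cf a g * Mval e t g p q.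
Proof.
rewrite /Mval big_ltn // big_add1 /= subSS subn0 expr0 mulr1; congr (_ + _).
symmetry; under eq_bigr do rewrite mulr_sumr.
rewrite exchange_big /=; symmetry; apply: eq_big_nat => s /andP[s1 _].
case: s s1 => [//|s] _ /=; rewrite subSS mulr_suml mulr_suml; apply: eq_bigr => g _.
rewrite /cf exprS; ring.
Qed.

Lemma modpropE e L h t p q : modprop ty W mu e L h t p q =
  L t p * e t p q + \sum_(a <- index_enum 'I_C) (\sum_(j | ty j == a) L t j * h t j) * Mval e t a p q.
Proof. by []. Qed.

Definition s00 : 'I_m -> R := fun _ => 0.

Lemma run_spec e L h t : forall p q,
  run prog s00 e L h t (rE p q) = e t p q /\
  (forall a, run prog s00 e L h t (rM a p q) = Mval e t a p q) /\
  run prog s00 e L h t (rO p q) = modprop ty W mu e L h t p q.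
Proof.
elim: t => [|t IH] p q /=.
  have [H1 [H2 H3]] := prog_spec (e 0) (L 0) (h 0) s00 p q.
  have T0 : forall a, Tval p q a s00 = 0.
    by move=> a; rewrite /Tval /s00 big1 ?mulr0 ?addr0 // => g _; rewrite mulr0.
  split; first exact: H1.
  split; first by move=> a; rewrite H2 T0 Mval0.
  rewrite H3 modpropE; congr (_ + _); apply: eq_bigr => a _; by rewrite T0 Mval0.
have [H1 [H2 H3]] := prog_spec (e t.+1) (L t.+1) (h t.+1) (run prog s00 e L h t) p q.
have eT : forall a, Tval p q a (run prog s00 e L h t) = Mval e t.+1 a p q.
  move=> a; rewrite /Tval MvalS (IH p q).1; congr (_ + _).
  by apply: eq_bigr => g _; rewrite ((IH p q).2.1 g).
split; first exact: H1.
split; first by move=> a; rewrite H2 eT.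
rewrite H3 modpropE; congr (_ + _); apply: eq_bigr => a _; by rewrite eT.
Qed.

End Spec.

Lemma size_ie (T : finType) : size (index_enum T) = #|T|.
Proof. rewrite cardT; apply/perm_size/uniq_perm; rewrite ?index_enum_uniq ?enum_uniq //.
by move=> x; rewrite mem_index_enum mem_enum. Qed.

Lemma size_flat_le (A B : Type) (f : A -> seq B) (xs : seq A) k :
  (forall x, (size (f x) <= k)%N) -> (size (flatten (map f xs)) <= size xs * k)%N.
Proof.
move=> H; elim: xs => //= x xs IH; rewrite size_cat mulSn leq_add //.
Qed.

Lemma size_acc (R : realType) N m G y (pre : G -> seq (instr R N m)) gs acc k :
  (forall g, (size (pre g) <= k)%N) -> (size (acc_prog y pre gs acc) <= size gs * k.+1)%N.
Proof. by move=> H; apply: size_flat_le => g; rewrite size_cat addn1 ltnS. Qed.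

Lemma size_prog (R : realType) N C (ty : 'I_N -> 'I_C) (W : 'M[R]_N) (mu : R) :
  (size (prog ty W mu) <= C * (4 * N).+1 + N * N * (C * (3 * C).+2 + (C.+1 + (2 * C).+3)))%N.
Proof.
rewrite /prog size_cat; apply: leq_add; first rewrite /progS.
  apply: (leq_trans (@size_flat_le _ _ _ _ ((4 * N).+1) _)); last by rewrite size_ie card_ord.
  move=> a /=; rewrite ltnS; apply: (leq_trans (@size_acc _ _ _ _ _ _ _ _ 3 _)) => //.
  rewrite mulnC leq_mul2l /= size_filter.
  apply: (leq_trans (count_size _ _)); by rewrite size_ie card_ord.
apply: (leq_trans (@size_flat_le _ _ _ _ ((C * (3 * C).+2 + (C.+1 + (2 * C).+3))) _)); last first.
  by rewrite size_ie card_prod card_ord.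
move=> x; rewrite /blk !size_cat; apply: leq_add; last apply: leq_add.
- apply: (leq_trans (@size_flat_le _ _ _ _ ((3 * C).+2) _)); last by rewrite size_ie card_ord.
  move=> a; rewrite /stepT size_cat /= !addSn add0n !ltnS.
  apply: (leq_trans (@size_acc _ _ _ _ _ _ _ _ 2 _)) => //; by rewrite size_ie card_ord mulnC.
- rewrite /copy /= ltnS.
  apply: (leq_trans (@size_flat_le _ _ _ _ (1) _)) => //; by rewrite size_ie card_ord muln1.
  rewrite /= !addSn add0n !ltnS.
  apply: (leq_trans (@size_acc _ _ _ _ _ _ _ _ 1 _)) => //; by rewrite size_ie card_ord mulnC.
Qed.

Theorem proposition1 :
  exists K : nat,
  forall (R : realType) (N C : nat) (ty : 'I_N -> 'I_C),
    (forall a : 'I_C, exists j : 'I_N, ty j = a) ->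
  forall (W : 'M[R]_N) (mu : R),
  exists (m : nat) (prog : seq (instr R N m)) (s0 : 'I_m -> R)
         (out : 'I_N -> 'I_N -> 'I_m),
    (m <= K * C * N ^ 2)%N /\
    (size prog <= K * C ^ 2 * N ^ 2)%N /\
    forall (e : nat -> 'I_N -> 'I_N -> R) (L h : nat -> 'I_N -> R) (t : nat),
      (1 <= t)%N ->
      forall p q : 'I_N,
        run prog s0 e L h t (out p q) = modprop ty W mu e L h t p q.
Proof.
exists 20%N => R N C ty _ W mu.
case: N ty W => [|n] ty W.
  exists 0%N, [::], (fun _ => 0), (fun p _ => p).
  by split; [|split] => // e L h t _ [].
have C0 : (0 < C)%N by case: (ty ord0) => i /=; case: C {ty W} => // /[swap].
exists #|{: Reg n.+1 C}|, (prog ty W mu), (@s00 R n.+1 C), (@rO n.+1 C).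
split.
  rewrite /Reg !card_sum !card_prod !card_ord card_bool.
  rewrite !expnS expn0 !muln1; nia.
split.
  apply: (leq_trans (size_prog _ _ _)).
  rewrite !expnS expn0 !muln1; nia.
by move=> e L h t _ p q; rewrite (run_spec ty W mu e L h t p q).2.2.
Qed.
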